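(* Suppose a cube is inscribed in the unit sphere in $\mathbb{R}^3$ in such a way that two of its vertices lie at $(0,0,\pm1)$. Then the stereographic projection $S(x,y,z)=\frac{x}{1-z}+i\frac{y}{1-z}$ sends the remaining six vertices to the three vertices and the three midpoints of the sides of an equilateral triangle in $\mathbb{C}$. *)

(* Defs.v *)
From Stdlib Require Import Reals.
From Coquelicot Require Import Coquelicot.
Open Scope R_scope.

Definition pt : Type := (R * R * R)%type.

Definition px (p : pt) : R := fst (fst p).
Definition py (p : pt) : R := snd (fst p).
Definition pz (p : pt) : R := snd p.

Definition vadd (p q : pt) : pt := (px p + px q, py p + py q, pz p + pz q).
Definition vscal (a : R) (p : pt) : pt := (a * px p, a * py p, a * pz p).
Definition dot (p q : pt) : R := px p * px q + py p * py q + pz p * pz q.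
Definition vnorm (p : pt) : R := sqrt (dot p p).

Definition orthonormal (e1 e2 e3 : pt) : Prop :=
  dot e1 e1 = 1 /\ dot e2 e2 = 1 /\ dot e3 e3 = 1 /\
  dot e1 e2 = 0 /\ dot e1 e3 = 0 /\ dot e2 e3 = 0.

Definition sign (eps : R) : Prop := eps = 1 \/ eps = -1.

Definition is_cube_vertex_set (V : pt -> Prop) : Prop :=
  exists (c e1 e2 e3 : pt) (s : R),
    orthonormal e1 e2 e3 /\ 0 < s /\
    forall p, V p <->
      exists eps1 eps2 eps3, sign eps1 /\ sign eps2 /\ sign eps3 /\
        p = vadd c (vscal s (vadd (vscal eps1 e1)
                                (vadd (vscal eps2 e2) (vscal eps3 e3)))).

Definition inscribed_in_unit_sphere (V : pt -> Prop) : Prop :=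
  forall p, V p -> vnorm p = 1.

Definition stereo (p : pt) : C :=
  (px p / (1 - pz p), py p / (1 - pz p)).

Definition equilateral (a b c : C) : Prop :=
  a <> b /\ Cmod (a - b)%C = Cmod (b - c)%C /\ Cmod (b - c)%C = Cmod (c - a)%C.

Definition midpoint (a b : C) : C := ((a + b) / 2)%C.

(* Main.v *)
Require Import Defs.
From Stdlib Require Import Reals Lra Psatz.
From Coquelicot Require Import Coquelicot.
Open Scope R_scope.
Lemma sign_sq e : Defs.sign e -> e * e = 1.
Proof. intros [-> | ->]; ring. Qed.

Lemma Ceq (a b : C) : fst a = fst b -> snd a = snd b -> a = b.
Proof. destruct a, b; simpl; intros -> ->; reflexivity. Qed.

Definition Pt (fx1 fy1 fz1 fx2 fy2 fz2 fx3 fy3 fz3 e1 e2 e3 : R) : pt :=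
  (e1*fx1+e2*fx2+e3*fx3, e1*fy1+e2*fy2+e3*fy3, e1*fz1+e2*fz2+e3*fz3).

Lemma core (V : pt -> Prop) fx1 fy1 fz1 fx2 fy2 fz2 fx3 fy3 fz3 :
  fx1*fx1+fy1*fy1+fz1*fz1 = 1/3 ->
  fx2*fx2+fy2*fy2+fz2*fz2 = 1/3 ->
  fx3*fx3+fy3*fy3+fz3*fz3 = 1/3 ->
  fx1*fx2+fy1*fy2+fz1*fz2 = 0 ->
  fx1*fx3+fy1*fy3+fz1*fz3 = 0 ->
  fx2*fx3+fy2*fy3+fz2*fz3 = 0 ->
  fx1+fx2+fx3 = 0 -> fy1+fy2+fy3 = 0 -> fz1+fz2+fz3 = 1 ->
  (forall p, V p <-> exists e1 e2 e3, Defs.sign e1 /\ Defs.sign e2 /\ Defs.sign e3 /\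
     p = Pt fx1 fy1 fz1 fx2 fy2 fz2 fx3 fy3 fz3 e1 e2 e3) ->
  exists a b c : C,
    equilateral a b c /\
    forall w : C,
      (exists p, V p /\ p <> (0, 0, 1) /\ p <> (0, 0, -1) /\ stereo p = w) <->
      (w = a \/ w = b \/ w = c \/
       w = midpoint a b \/ w = midpoint b c \/ w = midpoint c a).
Proof.
  intros H11 H22 H33 H12 H13 H23 Sx Sy Sz HV.
  assert (Z1 : fz1 = 1/3).
  { assert (E : fz1*(fz1+fz2+fz3) = (fx1*fx1+fy1*fy1+fz1*fz1) + (fx1*fx2+fy1*fy2+fz1*fz2) + (fx1*fx3+fy1*fy3+fz1*fz3)
       - fx1*(fx1+fx2+fx3) - fy1*(fy1+fy2+fy3)) by ring.
    rewrite Sx, Sy, Sz, H11, H12, H13 in E. lra. }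
  assert (Z2 : fz2 = 1/3).
  { assert (E : fz2*(fz1+fz2+fz3) = (fx1*fx2+fy1*fy2+fz1*fz2) + (fx2*fx2+fy2*fy2+fz2*fz2) + (fx2*fx3+fy2*fy3+fz2*fz3)
       - fx2*(fx1+fx2+fx3) - fy2*(fy1+fy2+fy3)) by ring.
    rewrite Sx, Sy, Sz, H22, H12, H23 in E. lra. }
  assert (Z3 : fz3 = 1/3) by lra.
  subst fz1 fz2 fz3.
  exists (-3*fx1, -3*fy1), (-3*fx2, -3*fy2), (-3*fx3, -3*fy3).
  assert (fx3 = - fx1 - fx2) by lra. assert (fy3 = - fy1 - fy2) by lra.
  subst fx3 fy3.
  split.
  - unfold equilateral, Cmod, Cminus, Cplus, Copp; simpl.
    split; [|split].
    + intro H. injection H as Ha Hb. nra.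
    + f_equal. nra.
    + f_equal. nra.
  - intro w. split.
    + intros (p & Hp & Hn & Hs & <-).
      apply HV in Hp as (e1 & e2 & e3 & [-> | ->] & [-> | ->] & [-> | ->] & ->);
        unfold Pt, stereo, px, py, pz, midpoint, Cdiv, Cmult, Cinv, Cplus, RtoC in *; simpl.
      * exfalso; apply Hn; f_equal; [f_equal|]; lra.
      * do 2 right; left; apply Ceq; simpl; field.
      * right; left; apply Ceq; simpl; field.
      * do 4 right; left; apply Ceq; simpl; field.
      * left; apply Ceq; simpl; field.
      * do 5 right; apply Ceq; simpl; field.
      * do 3 right; left; apply Ceq; simpl; field.
      * exfalso; apply Hs; f_equal; [f_equal|]; lra.
    + intros H.
      destruct H as [-> | [-> | [-> | [-> | [-> | -> ]]]]].
      * exists (Pt fx1 fy1 (1/3) fx2 fy2 (1/3) (-fx1-fx2) (-fy1-fy2) (1/3) (-1) 1 1).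
        split; [apply HV; exists (-1), 1, 1; unfold Defs.sign; repeat split; auto|].
        unfold Pt, stereo, px, py, pz; split; [|split]; [intro H; injection H; lra|intro H; injection H; lra|].
        apply Ceq; simpl; field.
      * exists (Pt fx1 fy1 (1/3) fx2 fy2 (1/3) (-fx1-fx2) (-fy1-fy2) (1/3) 1 (-1) 1).
        split; [apply HV; exists 1, (-1), 1; unfold Defs.sign; repeat split; auto|].
        unfold Pt, stereo, px, py, pz; split; [|split]; [intro H; injection H; lra|intro H; injection H; lra|].
        apply Ceq; simpl; field.
      * exists (Pt fx1 fy1 (1/3) fx2 fy2 (1/3) (-fx1-fx2) (-fy1-fy2) (1/3) 1 1 (-1)).
        split; [apply HV; exists 1, 1, (-1); unfold Defs.sign; repeat split; auto|].
        unfold Pt, stereo, px, py, pz; split; [|split]; [intro H; injection H; lra|intro H; injection H; lra|].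
        apply Ceq; simpl; field.
      * exists (Pt fx1 fy1 (1/3) fx2 fy2 (1/3) (-fx1-fx2) (-fy1-fy2) (1/3) (-1) (-1) 1).
        split; [apply HV; exists (-1), (-1), 1; unfold Defs.sign; repeat split; auto|].
        unfold Pt, stereo, px, py, pz; split; [|split]; [intro H; injection H; lra|intro H; injection H; lra|].
        unfold midpoint, Cdiv, Cmult, Cinv, Cplus, RtoC.
        apply Ceq; simpl; field.
      * exists (Pt fx1 fy1 (1/3) fx2 fy2 (1/3) (-fx1-fx2) (-fy1-fy2) (1/3) 1 (-1) (-1)).
        split; [apply HV; exists 1, (-1), (-1); unfold Defs.sign; repeat split; auto|].
        unfold Pt, stereo, px, py, pz; split; [|split]; [intro H; injection H; lra|intro H; injection H; lra|].
        unfold midpoint, Cdiv, Cmult, Cinv, Cplus, RtoC.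
        apply Ceq; simpl; field.
      * exists (Pt fx1 fy1 (1/3) fx2 fy2 (1/3) (-fx1-fx2) (-fy1-fy2) (1/3) (-1) 1 (-1)).
        split; [apply HV; exists (-1), 1, (-1); unfold Defs.sign; repeat split; auto|].
        unfold Pt, stereo, px, py, pz; split; [|split]; [intro H; injection H; lra|intro H; injection H; lra|].
        unfold midpoint, Cdiv, Cmult, Cinv, Cplus, RtoC.
        apply Ceq; simpl; field.
Qed.

Lemma sign_mul a b : Defs.sign a -> Defs.sign b -> Defs.sign (a*b).
Proof. unfold Defs.sign; intros [-> | ->] [-> | ->]; [left|right|right|left]; ring. Qed.

Lemma sign_opp a : Defs.sign a -> Defs.sign (-a).
Proof. unfold Defs.sign; intros [-> | ->]; [right|left]; ring. Qed.

Lemma sqrt1 x : sqrt x = 1 -> x = 1.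
Proof.
  intro H. destruct (Rle_lt_dec 0 x) as [h|h].
  - rewrite <- (sqrt_sqrt x h), H; ring.
  - rewrite sqrt_neg_0 in H; lra.
Qed.

Lemma usq x1 y1 z1 x2 y2 z2 x3 y3 z3 e1 e2 e3 :
  x1 * x1 + y1 * y1 + z1 * z1 = 1 ->
  x2 * x2 + y2 * y2 + z2 * z2 = 1 ->
  x3 * x3 + y3 * y3 + z3 * z3 = 1 ->
  x1 * x2 + y1 * y2 + z1 * z2 = 0 ->
  x1 * x3 + y1 * y3 + z1 * z3 = 0 ->
  x2 * x3 + y2 * y3 + z2 * z3 = 0 ->
  Defs.sign e1 -> Defs.sign e2 -> Defs.sign e3 ->
  (e1*x1+(e2*x2+e3*x3))*(e1*x1+(e2*x2+e3*x3)) + (e1*y1+(e2*y2+e3*y3))*(e1*y1+(e2*y2+e3*y3))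
  + (e1*z1+(e2*z2+e3*z3))*(e1*z1+(e2*z2+e3*z3)) = 3.
Proof.
  intros H11 H22 H33 H12 H13 H23 h1 h2 h3.
  apply sign_sq in h1, h2, h3.
  replace ((e1*x1+(e2*x2+e3*x3))*(e1*x1+(e2*x2+e3*x3)) + (e1*y1+(e2*y2+e3*y3))*(e1*y1+(e2*y2+e3*y3))
  + (e1*z1+(e2*z2+e3*z3))*(e1*z1+(e2*z2+e3*z3))) with
   ((e1*e1)*(x1 * x1 + y1 * y1 + z1 * z1) + (e2*e2)*(x2 * x2 + y2 * y2 + z2 * z2)
    + (e3*e3)*(x3 * x3 + y3 * y3 + z3 * z3) + 2*(e1*e2)*(x1 * x2 + y1 * y2 + z1 * z2)
    + 2*(e1*e3)*(x1 * x3 + y1 * y3 + z1 * z3) + 2*(e2*e3)*(x2 * x3 + y2 * y3 + z2 * z3)) by ring.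
  rewrite H11, H22, H33, H12, H13, H23, h1, h2, h3. ring.
Qed.

Theorem lemma3p8 (V : pt -> Prop) :
  is_cube_vertex_set V ->
  inscribed_in_unit_sphere V ->
  V (0, 0, 1) -> V (0, 0, -1) ->
  exists a b c : C,
    equilateral a b c /\
    forall w : C,
      (exists p, V p /\ p <> (0, 0, 1) /\ p <> (0, 0, -1) /\ stereo p = w) <->
      (w = a \/ w = b \/ w = c \/
       w = midpoint a b \/ w = midpoint b c \/ w = midpoint c a).
Proof.
  intros [c [e1 [e2 [e3 [s [Horth [Hs HV]]]]]]] Hins HN HS.
  destruct c as [[cx cy] cz], e1 as [[x1 y1] z1], e2 as [[x2 y2] z2], e3 as [[x3 y3] z3].
  unfold orthonormal, dot, px, py, pz in Horth; simpl in Horth.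
  destruct Horth as (H11 & H22 & H33 & H12 & H13 & H23).
  apply HV in HN as (a1 & a2 & a3 & Ha1 & Ha2 & Ha3 & EN).
  apply HV in HS as (b1 & b2 & b3 & Hb1 & Hb2 & Hb3 & ES).
  unfold vadd, vscal, px, py, pz in EN, ES; simpl in EN, ES.
  injection EN as EN1 EN2 EN3. injection ES as ES1 ES2 ES3.
  assert (HA := Hins (vadd (cx, cy, cz) (vscal s (vadd (vscal (-a1) (x1, y1, z1))
              (vadd (vscal (-a2) (x2, y2, z2)) (vscal (-a3) (x3, y3, z3))))))).
  specialize (HA (proj2 (HV _) ltac:(exists (-a1), (-a2), (-a3); repeat split;
    try apply sign_opp; auto; reflexivity))).
  apply sqrt1 in HA. unfold vadd, vscal, dot, px, py, pz in HA; simpl in HA.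
  pose proof (usq x1 y1 z1 x2 y2 z2 x3 y3 z3 a1 a2 a3 H11 H22 H33 H12 H13 H23 Ha1 Ha2 Ha3) as UA.
  pose proof (usq x1 y1 z1 x2 y2 z2 x3 y3 z3 b1 b2 b3 H11 H22 H33 H12 H13 H23 Hb1 Hb2 Hb3) as UB.
  assert (HA' : (cx - s*(a1 * x1 + (a2 * x2 + a3 * x3)))*(cx - s*(a1 * x1 + (a2 * x2 + a3 * x3)))
     + (cy - s*(a1 * y1 + (a2 * y2 + a3 * y3)))*(cy - s*(a1 * y1 + (a2 * y2 + a3 * y3)))
     + (cz - s*(a1 * z1 + (a2 * z2 + a3 * z3)))*(cz - s*(a1 * z1 + (a2 * z2 + a3 * z3))) = 1)
    by (rewrite <- HA; ring).
  clear HA.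
  set (Ax := a1 * x1 + (a2 * x2 + a3 * x3)) in *.
  set (Ay := a1 * y1 + (a2 * y2 + a3 * y3)) in *.
  set (Az := a1 * z1 + (a2 * z2 + a3 * z3)) in *.
  set (Bx := b1 * x1 + (b2 * x2 + b3 * x3)) in *.
  set (By := b1 * y1 + (b2 * y2 + b3 * y3)) in *.
  set (Bz := b1 * z1 + (b2 * z2 + b3 * z3)) in *.
  assert (Ecx : cx = - (s*Ax)) by lra.
  assert (Ecy : cy = - (s*Ay)) by lra.
  assert (Ecz : cz = 1 - (s*Az)) by lra.
  assert (EBx : s*Bx = s*Ax) by lra.
  assert (EBy : s*By = s*Ay) by lra.
  assert (EBz : s*Bz = s*Az - 2) by lra.
  rewrite Ecx, Ecy, Ecz in HA'.
  assert (WA : (s*Ax)*(s*Ax) + (s*Ay)*(s*Ay) + (s*Az)*(s*Az) = 3*(s*s))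
    by (rewrite <- UA; ring).
  assert (WB : (s*Bx)*(s*Bx) + (s*By)*(s*By) + (s*Bz)*(s*Bz) = 3*(s*s))
    by (rewrite <- UB; ring).
  rewrite EBx, EBy, EBz in WB.
  assert (Z1 : s*Az = 1) by nra.
  assert (S3 : s*s = 1/3) by nra.
  assert (X0 : s*Ax = 0) by nra.
  assert (Y0 : s*Ay = 0) by nra.
  apply (core V (s*a1*x1) (s*a1*y1) (s*a1*z1) (s*a2*x2) (s*a2*y2) (s*a2*z2) (s*a3*x3) (s*a3*y3) (s*a3*z3));
   apply sign_sq in Ha1 as Sa1; apply sign_sq in Ha2 as Sa2; apply sign_sq in Ha3 as Sa3.
  - replace (s * a1 * x1 * (s * a1 * x1) + s * a1 * y1 * (s * a1 * y1) + s * a1 * z1 * (s * a1 * z1))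
      with ((s*s)*(a1*a1)*(x1 * x1 + y1 * y1 + z1 * z1)) by ring. rewrite S3, Sa1, H11; ring.
  - replace (s * a2 * x2 * (s * a2 * x2) + s * a2 * y2 * (s * a2 * y2) + s * a2 * z2 * (s * a2 * z2))
      with ((s*s)*(a2*a2)*(x2 * x2 + y2 * y2 + z2 * z2)) by ring. rewrite S3, Sa2, H22; ring.
  - replace (s * a3 * x3 * (s * a3 * x3) + s * a3 * y3 * (s * a3 * y3) + s * a3 * z3 * (s * a3 * z3))
      with ((s*s)*(a3*a3)*(x3 * x3 + y3 * y3 + z3 * z3)) by ring. rewrite S3, Sa3, H33; ring.
  - replace (s * a1 * x1 * (s * a2 * x2) + s * a1 * y1 * (s * a2 * y2) + s * a1 * z1 * (s * a2 * z2))
      with ((s*s)*(a1*a2)*(x1 * x2 + y1 * y2 + z1 * z2)) by ring. rewrite H12; ring.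
  - replace (s * a1 * x1 * (s * a3 * x3) + s * a1 * y1 * (s * a3 * y3) + s * a1 * z1 * (s * a3 * z3))
      with ((s*s)*(a1*a3)*(x1 * x3 + y1 * y3 + z1 * z3)) by ring. rewrite H13; ring.
  - replace (s * a2 * x2 * (s * a3 * x3) + s * a2 * y2 * (s * a3 * y3) + s * a2 * z2 * (s * a3 * z3))
      with ((s*s)*(a2*a3)*(x2 * x3 + y2 * y3 + z2 * z3)) by ring. rewrite H23; ring.
  - rewrite <- X0; unfold Ax; ring.
  - rewrite <- Y0; unfold Ay; ring.
  - rewrite <- Z1; unfold Az; ring.
  - intro p. rewrite HV. rewrite Ecx, Ecy, Ecz, X0, Y0, Z1.
    unfold Pt, vadd, vscal, px, py, pz; simpl.
    split; intros (e1 & e2 & e3 & h1 & h2 & h3 & ->).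
    + exists (e1*a1), (e2*a2), (e3*a3); repeat split; try apply sign_mul; auto.
      destruct Ha1 as [-> | ->], Ha2 as [-> | ->], Ha3 as [-> | ->];
        (apply f_equal2; [apply f_equal2|]; ring).
    + exists (e1*a1), (e2*a2), (e3*a3); repeat split; try apply sign_mul; auto.
      destruct Ha1 as [-> | ->], Ha2 as [-> | ->], Ha3 as [-> | ->];
        (apply f_equal2; [apply f_equal2|]; ring).
Qed.
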